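(* Let $\mathscr G=(\mathscr V,\mathscr E)$ be a finite connected graph with $N$ vertices, let $M\ge 0$ be an integer, and let $(Z_t)_{t\in\mathbb N}$ be the uniform saving model on $\mathscr G$ with $M$ coins, started from an arbitrary configuration. Then for every vertex $x\in\mathscr V$ and every $c\in\{0,1,\dots,M\}$, $$\lim_{t\to\infty}P(Z_t(x)=c)=(c+1)\binom{M-c+2N-3}{2N-3}\Big/\binom{M+2N-1}{2N-1}.$$ In particular, when $N$ and $T=M/N$ are large, $\lim_{t\to\infty}P(Z_t(x)=c)\approx \frac{4c}{T^2} e^{-2c/T}$.
   Context: A configuration is a map $\xi:\mathscr V\to\mathbb N$; $\mathscr C_{N,M}$ denotes the set of configurations with $\sum_x\xi(x)=M$. The uniform saving model is the discrete-time Markov chain on $\mathscr C_{N,M}$ evolving as follows: at each time step $t$, an edge $(x,y)\in\mathscr E$ is chosen uniformly at random; independent random variables $U_1$ uniform on $\{0,\dots,Z_t(x)\}$ and $U_2$ uniform on $\{0,\dots,Z_t(y)\}$ are drawn; given $U_1=c_x$, $U_2=c_y$, a random variable $U$ uniform on $\{0,1,\dots,Z_t(x)+Z_t(y)-c_x-c_y\}$ is drawn; then $Z_{t+1}(x)=c_x+U$, $Z_{t+1}(y)=Z_t(x)+Z_t(y)-c_x-U$, and $Z_{t+1}(z)=Z_t(z)$ for $z\notin\{x,y\}$. *)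

(* Defs.v *)
From HB Require Import structures.
From mathcomp Require Import all_boot all_order all_algebra.
From mathcomp Require Import all_classical all_reals all_analysis.
Set Implicit Arguments. Unset Strict Implicit. Unset Printing Implicit Defensive.
Import Order.TTheory GRing.Theory Num.Theory.
Local Open Scope ring_scope.

Section UniformSaving.
Variables (R : realType) (V : finType) (e : rel V) (M : nat).

(* Configurations with values in {0..M}; the model lives on those with
   total mass M (the set C_{N,M}). *)
Definition config := {ffun V -> 'I_M.+1}.

Definition in_CNM (xi : config) : bool := (\sum_(x : V) nat_of_ord (xi x) == M)%N.

Definition edges : {set V * V} := [set p | e p.1 p.2].

(* The configuration obtained from xi after the exchange on edge (x,y)
   with U_1 = cx and U = u. *)
Definition update (xi : config) (x y : V) (cx u : nat) : V -> nat :=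
  fun z => if z == x then (cx + u)%N
           else if z == y then (xi x + xi y - cx - u)%N
           else nat_of_ord (xi z).

Definition step_prob (xi xi' : config) : R :=
  (#|edges|%:R)^-1 *
  \sum_(p in edges)
    \sum_(cx < (xi p.1).+1) \sum_(cy < (xi p.2).+1)
      \sum_(u < (xi p.1 + xi p.2 - cx - cy).+1)
        (((xi p.1).+1%:R)^-1 * ((xi p.2).+1%:R)^-1 *
         ((xi p.1 + xi p.2 - cx - cy).+1%:R)^-1 *
         (if [forall z, nat_of_ord (xi' z) == update xi p.1 p.2 cx u z]
          then 1 else 0)).

Fixpoint law (xi0 : config) (t : nat) : config -> R :=
  match t with
  | 0 => fun xi => (xi == xi0)%:R
  | t'.+1 => fun xi' => \sum_(xi : config) law xi0 t' xi * step_prob xi xi'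
  end.

Definition prob_at (xi0 : config) (t : nat) (x : V) (c : nat) : R :=
  \sum_(xi : config | nat_of_ord (xi x) == c) law xi0 t xi.

End UniformSaving.

(* Main.v *)
Require Import Defs.
From HB Require Import structures.
From mathcomp Require Import all_boot all_order all_algebra.
From mathcomp Require Import all_classical all_reals all_analysis.
From mathcomp Require Import zify ring lra.
Import Order.TTheory GRing.Theory Num.Theory numFieldNormedType.Exports.
Local Open Scope classical_set_scope.
Local Open Scope ring_scope.
Set Implicit Arguments. Unset Strict Implicit. Unset Printing Implicit Defensive.
Section Generic.
Variables (R : realType) (S : finType) (P : S -> S -> R) (A : pred S).

Fixpoint glaw (a0 : S) (t : nat) : S -> R :=
  match t with
  | 0 => fun b => (b == a0)%:R
  | t'.+1 => fun b => \sum_a glaw a0 t' a * P a b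
  end.

Hypothesis P_ge0 : forall a b, 0 <= P a b.
Hypothesis P_sum : forall a, A a -> \sum_b P a b = 1.
Hypothesis P_supp : forall a b, A a -> ~~ A b -> P a b = 0.

Lemma sum_ge_term (I : finType) (F : I -> R) (i : I) :
  (forall j, 0 <= F j) -> F i <= \sum_j F j.
Proof.
move=> H; rewrite (bigD1 i) //= lerDl; apply: sumr_ge0 => j _; exact: H.
Qed.

Lemma glaw_ge0 a0 t b : 0 <= glaw a0 t b.
Proof.
elim: t b => [|t IH] b /=; first by rewrite ler0n.
by apply: sumr_ge0 => a _; apply: mulr_ge0.
Qed.

Lemma glaw_supp a0 t b : A a0 -> ~~ A b -> glaw a0 t b = 0.
Proof.
move=> Ha0; elim: t b => [|t IH] b Hb /=.
  by case: eqP => // Eb; rewrite Eb Ha0 in Hb.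
apply: big1 => a _; case: (boolP (A a)) => Ha.
  by rewrite P_supp // mulr0.
by rewrite IH // mul0r.
Qed.

Lemma glaw_sum a0 t : A a0 -> \sum_b glaw a0 t b = 1.
Proof.
move=> Ha0; elim: t => [|t IH] /=.
  rewrite (bigD1 a0) //= eqxx big1 ?addr0 // => b /negbTE -> //.
rewrite exchange_big /= -[RHS]IH; apply: eq_bigr => a _.
rewrite -mulr_sumr; case: (boolP (A a)) => Ha.
  by rewrite P_sum // mulr1.
by rewrite glaw_supp // !mul0r.
Qed.

Lemma glaw_le1 a0 t b : A a0 -> glaw a0 t b <= 1.
Proof.
move=> Ha; rewrite -(glaw_sum t Ha); apply: sum_ge_term => j; exact: glaw_ge0.
Qed.

Lemma glaw_CK a0 t n b :
  glaw a0 (t + n) b = \sum_a glaw a0 t a * glaw a n b.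
Proof.
elim: n b => [|n IH] b.
  rewrite addn0 /= (bigD1 b) //= eqxx mulr1 big1 ?addr0 // => a Hab.
  by rewrite eq_sym (negbTE Hab) mulr0.
rewrite addnS /=.
under eq_bigr do rewrite IH mulr_suml.
rewrite exchange_big; apply: eq_bigr => a _ /=.
by rewrite mulr_sumr; apply: eq_bigr => c _; rewrite mulrA.
Qed.

Lemma glaw_fwd a n b : glaw a n.+1 b = \sum_c P a c * glaw c n b.
Proof.
rewrite -add1n glaw_CK; apply: eq_bigr => c _ /=.
congr (_ * _); rewrite (bigD1 a) //= eqxx mul1r big1 ?addr0 // => d Hd.
by rewrite (negbTE Hd) mul0r.
Qed.

Variable pi : S -> R.
Hypothesis pi_stat : forall b, \sum_a pi a * P a b = pi b.

Lemma pi_stat_n n b : \sum_a pi a * glaw a n b = pi b.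
Proof.
elim: n b => [|n IH] b /=.
  rewrite (bigD1 b) //= eqxx mulr1 big1 ?addr0 // => a Hab.
  by rewrite eq_sym (negbTE Hab) mulr0.
under eq_bigr do rewrite mulr_sumr.
rewrite exchange_big /= -pi_stat; apply: eq_bigr => c _.
by rewrite -IH mulr_suml; apply: eq_bigr => a _; rewrite mulrA.
Qed.

Lemma contract (d : S -> R) n (s : S) (del : R) :
  (forall a, ~~ A a -> d a = 0) -> \sum_a d a = 0 ->
  (forall a, A a -> del <= glaw a n s) ->
  \sum_b `| \sum_a d a * glaw a n b | <= (1 - del) * \sum_a `|d a|.
Proof.
move=> Hsupp Hsum Hdel.
pose w a b := glaw a n b - del * (b == s)%:R.
have step b : \sum_a d a * glaw a n b = \sum_a d a * w a b.
  rewrite /w; under [RHS]eq_bigr do rewrite mulrBr.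
  by rewrite sumrB -mulr_suml Hsum mul0r subr0.
under eq_bigr do rewrite step.
apply: le_trans (_ : \sum_b \sum_a `|d a| * `|w a b| <= _).
  apply: ler_sum => b _; apply: le_trans (ler_norm_sum _ _ _) _.
  by apply: ler_sum => a _; rewrite normrM.
rewrite exchange_big /= mulr_sumr; apply: ler_sum => a _.
rewrite -mulr_sumr mulrC; case: (boolP (A a)) => Ha; last first.
  by rewrite Hsupp // normr0 !mulr0.
apply: ler_wpM2r; first exact: normr_ge0.
have wge0 b : 0 <= w a b.
  rewrite /w; case: (eqVneq b s) => [->|Hb]; first by rewrite mulr1 subr_ge0 Hdel.
  by rewrite mulr0 subr0 glaw_ge0.
under eq_bigr do rewrite ger0_norm //.
rewrite /w sumrB glaw_sum // -mulr_sumr (bigD1 s) //= eqxx big1 ?addr0 ?mulr1 //.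
by move=> b /negbTE ->.
Qed.

End Generic.
Section GenCvg.
Variables (R : realType) (S : finType) (P : S -> S -> R) (A : pred S).
Hypothesis P_ge0 : forall a b, 0 <= P a b.
Hypothesis P_sum : forall a, A a -> \sum_b P a b = 1.
Hypothesis P_supp : forall a b, A a -> ~~ A b -> P a b = 0.
Variable pi : S -> R.
Hypothesis pi_stat : forall b, \sum_a pi a * P a b = pi b.
Hypothesis pi_ge0 : forall a, 0 <= pi a.
Hypothesis pi_supp : forall a, ~~ A a -> pi a = 0.
Hypothesis pi_sum : \sum_a pi a = 1.

Lemma gen_cvg a0 (B : pred S) n0 s del : A a0 -> (0 < n0)%N -> 0 < del ->
  (forall a, A a -> del <= glaw P a n0 s) ->
  (fun t => \sum_(b | B b) glaw P a0 t b) @ \oo --> \sum_(b | B b) pi b.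
Proof.
move=> Ha0 n0pos delpos Hdel.
pose L t := \sum_b `|glaw P a0 t b - pi b|.
have L2 t : L t <= 2.
  apply: le_trans (_ : \sum_b (glaw P a0 t b + pi b) <= _).
    apply: ler_sum => b _; apply: le_trans (ler_normB _ _) _.
    by rewrite !ger0_norm // glaw_ge0.
  by rewrite big_split /= (glaw_sum P_sum P_supp _ Ha0) pi_sum.
have del1 : del <= 1 by apply: le_trans (Hdel _ Ha0) (glaw_le1 P_ge0 P_sum P_supp _ _ Ha0).
have Lstep t : L (t + n0)%N <= (1 - del) * L t.
  rewrite /L.
  have -> : \sum_b `|glaw P a0 (t + n0) b - pi b| =
     \sum_b `|\sum_a (glaw P a0 t a - pi a) * glaw P a n0 b|.
    apply: eq_bigr => b _; rewrite glaw_CK -(pi_stat_n pi_stat n0 b).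
    by rewrite -sumrB; congr `|_|; apply: eq_bigr => a _; rewrite mulrBl.
  apply: (contract P_ge0 P_sum P_supp).
  - by move=> a Ha; rewrite (glaw_supp P_supp _ Ha0) // pi_supp // subr0.
  - by rewrite sumrB (glaw_sum P_sum P_supp _ Ha0) pi_sum subrr.
  - exact: Hdel.
have Lk k r : L (k * n0 + r)%N <= (1 - del) ^+ k * 2.
  elim: k => [|k IH]; first by rewrite mul0n add0n expr0 mul1r.
  rewrite mulSn -addnA addnC; apply: le_trans (Lstep _) _.
  rewrite exprS -mulrA; apply: ler_wpM2l; first by rewrite subr_ge0.
  exact: IH.
have bound t : `|\sum_(b | B b) pi b - \sum_(b | B b) glaw P a0 t b| <=
               (1 - del) ^+ (t %/ n0) * 2.
  apply: le_trans (_ : L t <= _); last by rewrite {1}(divn_eq t n0) Lk.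
  rewrite -sumrB; apply: le_trans (ler_norm_sum _ _ _) _.
  rewrite /L [X in _ <= X](bigID B) /=; apply: ler_wpDr.
    by apply: sumr_ge0 => b _.
  by apply: ler_sum => b _; rewrite distrC.
apply/cvgrPdist_le => eps epos.
have q1 : `|1 - del| < 1.
  by rewrite ger0_norm ?subr_ge0 // ltrBlDr ltrDl.
have := cvg_expr q1; move/cvgr0Pnorm_le => /(_ (eps / 2)).
rewrite divr_gt0 // => /(_ isT) [K _ HK].
exists (K * n0)%N => // t /= Kt.
apply: le_trans (bound t) _.
have Kle : (K <= t %/ n0)%N by rewrite leq_divRL.
have := HK _ Kle; rewrite /= normrX ger0_norm ?subr_ge0 // => H.
by rewrite -ler_pdivlMr //.
Qed.
End GenCvg.
Section GenReach.
Variables (R : realType) (S : finType) (P : S -> S -> R) (A : pred S).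
Hypothesis P_ge0 : forall a b, 0 <= P a b.
Variables (s : S) (Phi : S -> nat).
Hypothesis Pss : 0 < P s s.
Hypothesis descent : forall a, A a -> a != s ->
  exists b, [/\ A b, 0 < P a b & (Phi b < Phi a)%N].

Lemma reach : forall a, A a -> exists n, 0 < glaw P a n s.
Proof.
suff H : forall k a, (Phi a < k)%N -> A a -> exists n, 0 < glaw P a n s.
  by move=> a Ha; apply: (H (Phi a).+1).
elim=> // k IH a Hk Ha.
case: (eqVneq a s) => [->|Has]; first by exists 0%N; rewrite /= eqxx ltr01.
have [b [Hb Pab Phib]] := descent Ha Has.
have [n Hn] := IH b (leq_trans Phib (Hk : (Phi a < k.+1)%N)) Hb.
exists n.+1; rewrite glaw_fwd.
apply: lt_le_trans (_ : P a b * glaw P b n s <= _); first exact: mulr_gt0.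
apply: (@sum_ge_term _ _ (fun c => P a c * glaw P c n s) b) => c.
by apply: mulr_ge0 => //; apply: glaw_ge0.
Qed.

Lemma reach_mono a n m : (n <= m)%N -> 0 < glaw P a n s -> 0 < glaw P a m s.
Proof.
move=> /subnK <-; elim: (m - n)%N => // k IH /IH H.
rewrite addSn /=.
apply: lt_le_trans (_ : glaw P a (k + n) s * P s s <= _); first exact: mulr_gt0.
apply: (@sum_ge_term _ _ (fun c => glaw P a (k + n) c * P c s) s) => c.
by apply: mulr_ge0 => //; apply: glaw_ge0.
Qed.

Lemma reach_unif : exists n0 del, [/\ (0 < n0)%N, 0 < del &
  forall a, A a -> del <= glaw P a n0 s].
Proof.
have [n0 Hn0] : exists n0, forall a, A a -> 0 < glaw P a n0 s.
  have : exists n0, forall a, a \in enum S -> A a -> 0 < glaw P a n0 s.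
    elim: (enum S) => [|h l [n1 IH]]; first by exists 0%N.
    case: (boolP (A h)) => Hh; last first.
      exists n1 => a; rewrite inE => /orP [/eqP ->|]; first by rewrite (negbTE Hh).
      exact: IH.
    have [n2 Hn2] := reach Hh.
    exists (maxn n1 n2) => a; rewrite inE => /orP [/eqP ->|] => [_|Ha Ha'].
      by apply: reach_mono Hn2; apply: leq_maxr.
    by apply: reach_mono (IH _ Ha Ha'); apply: leq_maxl.
  by move=> [n0 H]; exists n0 => a; apply: H; rewrite mem_enum.
have Hn1 a : A a -> 0 < glaw P a n0.+1 s.
  by move=> Ha; apply: reach_mono (Hn0 _ Ha).
exists n0.+1.
have : exists del, 0 < del /\ forall a, a \in enum S -> A a -> del <= glaw P a n0.+1 s.
  elim: (enum S) => [|h l [d [dpos IH]]]; first by exists 1; split.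
  case: (boolP (A h)) => Hh; last first.
    exists d; split => // a; rewrite inE => /orP [/eqP ->|]; first by rewrite (negbTE Hh).
    exact: IH.
  exists (Num.min d (glaw P h n0.+1 s)); split; first by rewrite lt_min dpos Hn1.
  move=> a; rewrite inE => /orP [/eqP ->|] => [_|Ha Ha']; first by rewrite ge_min lexx orbT.
  by rewrite ge_min (IH _ Ha Ha').
move=> [d [dpos H]]; exists d; split => // a Ha; apply: H => //; by rewrite mem_enum.
Qed.
End GenReach.
Lemma binid_H k m : (\sum_(j < m.+1) 'C(j + k, j))%N = 'C(m + k + 1, m).
Proof.
elim: m => [|m IH]; first by rewrite big_ord1 !bin0.
rewrite big_ord_recr /= IH.
have -> : (m.+1 + k + 1 = (m + k + 1).+1)%N by lia.
by rewrite binS addnC addn1 addSn.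
Qed.

Lemma binid k m :
  (\sum_(j < m.+1) 'C(j + k, j) * (m - j).+1)%N = 'C(m + k + 2, m).
Proof.
elim: m => [|m IH]; first by rewrite big_ord1 !bin0.
have E : (\sum_(j < m.+2) 'C(j + k, j) * (m.+1 - j).+1 =
   \sum_(j < m.+2) 'C(j + k, j) * (m.+1 - j) + \sum_(j < m.+2) 'C(j + k, j))%N.
  by rewrite -big_split /=; apply: eq_bigr => j _; rewrite mulnS addnC.
rewrite E binid_H big_ord_recr /= subnn muln0 addn0.
have -> : (\sum_(i < m.+1) 'C(i + k, i) * (m.+1 - i) =
           \sum_(i < m.+1) 'C(i + k, i) * (m - i).+1)%N.
  apply: eq_bigr => i _; congr (_ * _); have := ltn_ord i; lia.
rewrite IH.
have -> : (m.+1 + k + 2 = (m + k + 2).+1)%N by lia.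
have -> : (m.+1 + k + 1 = (m + k + 2))%N by lia.
by rewrite binS addnC.
Qed.

Section Comb.
Variables (R : realType) (V : finType) (M : nat).

Definition Qp : {poly R} := \poly_(i < M.+1) (i.+1)%:R.

Lemma coefQn n m : (m <= M)%N -> (Qp ^+ n.+1)`_m = ('C(m + 2 * n + 1, m))%:R.
Proof.
elim: n m => [|n IH] m Hm.
  by rewrite expr1 coef_poly ltnS Hm muln0 addn0 addn1 binSn.
rewrite exprSr coefM.
have -> : \sum_(j < m.+1) (Qp ^+ n.+1)`_j * Qp`_(m - j) =
   \sum_(j < m.+1) ('C(j + (2 * n + 1), j) * (m - j).+1)%N%:R.
  apply: eq_bigr => j _.
  have Hj : (j <= M)%N by apply: leq_trans Hm; rewrite -ltnS.
  rewrite IH // coef_poly ltnS (leq_trans (leq_subr _ _) Hm) natrM.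
  by rewrite addnA.
rewrite -natr_sum binid; congr (_%:R); congr 'C(_, _).
lia.
Qed.

Lemma gen_fun (g : V -> nat -> R) :
  (\prod_v \sum_(k < M.+1) g v k *: 'X^k)`_M =
  \sum_(f : {ffun V -> 'I_M.+1} | (\sum_v (f v : nat) == M)%N) \prod_v g v (f v).
Proof.
rewrite bigA_distr_bigA coef_sum [RHS]big_mkcond /=; apply: eq_bigr => f _.
have -> : \prod_v (g v (f v) *: 'X^(f v)) =
          (\prod_v g v (f v)) *: 'X^(\sum_v (f v : nat)).
  rewrite -mul_polyC rmorph_prod -prodrXr -big_split /=.
  by apply: eq_bigr => v _; rewrite mul_polyC.
by rewrite coefZ coefXn eq_sym; case: eqP => _; rewrite ?mulr1 ?mulr0.
Qed.

Lemma Qp_def : Qp = \sum_(k < M.+1) (k.+1)%:R *: 'X^k.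
Proof. by rewrite /Qp poly_def. Qed.

Lemma total_count : (0 < #|V|)%N ->
  \sum_(f : config V M | in_CNM f) \prod_v ((f v).+1)%:R =
  ('C(M + 2 * #|V| - 1, M))%:R :> R.
Proof.
move=> Vpos.
rewrite /in_CNM -(gen_fun (fun v k => (k.+1)%:R)).
rewrite (eq_bigr (fun _ => Qp)); last by move=> v _; rewrite Qp_def.
rewrite prodr_const; case: #|V| Vpos => // n _.
rewrite coefQn //; congr (_%:R); congr 'C(_, _); lia.
Qed.

Lemma marg_count x c : (1 < #|V|)%N -> (c <= M)%N ->
  \sum_(f : config V M | in_CNM f && (nat_of_ord (f x) == c)) \prod_v ((f v).+1)%:R =
  (c.+1)%:R * ('C(M - c + 2 * #|V| - 3, M - c))%:R :> R.
Proof.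
move=> V2 hc.
pose g v k : R := if v == x then (k == c)%:R * (k.+1)%:R else (k.+1)%:R.
have -> : \sum_(f : config V M | in_CNM f && (nat_of_ord (f x) == c))
            \prod_v ((f v).+1)%:R =
          \sum_(f : config V M | in_CNM f) \prod_v g v (f v).
  rewrite [RHS]big_mkcond [LHS]big_mkcond; apply: eq_bigr => f _.
  case: (in_CNM f) => //=.
  rewrite (bigD1 x) //= [in RHS](bigD1 x) //= /g eqxx.
  rewrite [in RHS](eq_bigr (fun v => ((f v).+1)%:R : R) (P := fun v => v != x)); last first.
    by move=> v /negbTE ->.
  by case: eqP; rewrite ?mul1r ?mul0r.
rewrite /in_CNM -gen_fun.
rewrite (bigD1 x) //=.
rewrite (eq_bigr (fun _ => Qp) (P := fun v => v != x)); last first.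
  by move=> v /negbTE Hv; rewrite Qp_def /g; apply: eq_bigr => k _; rewrite Hv.
have -> : \sum_(k < M.+1) g x k *: 'X^k = (c.+1)%:R *: 'X^c.
  rewrite (bigD1 (Ordinal (hc : (c < M.+1)%N))) //= /g eqxx eqxx mul1r big1 ?addr0 //.
  move=> k Hk.
  have -> : (nat_of_ord k == c) = false.
    by apply/negbTE; apply: contra Hk => /eqP Hk; apply/eqP; apply: val_inj.
  by rewrite mul0r scale0r.
rewrite prodr_const -scalerAl coefZ coefXnM ltnNge hc /=.
rewrite cardC1; case: #|V| V2 => // n; case: n => // n _.
rewrite /= coefQn ?leq_subr //; congr (_ * _%:R); congr 'C(_, _); lia.
Qed.
End Comb.
Lemma sum_min (R : realType) (f : nat -> R) n k :
  \sum_(i < n.+1) (i <= k)%:R * f i = \sum_(0 <= i < (minn n k).+1) f i.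
Proof.
elim: n => [|n IH]; first by rewrite min0n big_ord1 big_nat1 /= mul1r.
rewrite big_ord_recr IH /=; case: (leqP n.+1 k) => H.
  have -> : minn n k = n by apply/minn_idPl; apply: ltnW.
  by rewrite mul1r [RHS]big_nat_recr.
have -> : minn n k = k by apply/minn_idPr; rewrite -ltnS.
by rewrite mul0r addr0.
Qed.

Lemma big_split2 (V : finType) (T : Type) (idx : T) (op : Monoid.com_law idx)
  (F : V -> T) x y : x != y ->
  \big[op/idx]_v F v = op (F x) (op (F y) (\big[op/idx]_(v | (v != x) && (v != y)) F v)).
Proof.
move=> Hxy; rewrite (bigD1 x) //= (bigD1 y) /=; last by rewrite eq_sym.
by congr (op _ (op _ _)); apply: eq_bigl => v; rewrite andbC.
Qed.

Section Model.
Variables (R : realType) (V : finType) (e : rel V) (M : nat).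
Hypothesis e_irr : irreflexive e.
Local Notation S := (config V M).

Definition Pxy (xi xi' : S) (x y : V) : R :=
   \sum_(cx < (xi x).+1)
      \sum_(cy < (xi y).+1)
         \sum_(u < (xi x + xi y - cx - cy).+1)
            ((xi x).+1%:R^-1 / (xi y).+1%:R /
            (xi x + xi y - cx - cy).+1%:R *
            (if [forall z, nat_of_ord (xi' z) == update xi x y cx u z] then 1 else 0)).

Lemma step_probE xi xi' : step_prob R e xi xi' =
  #|edges e|%:R^-1 * \sum_(p in edges e) Pxy xi xi' p.1 p.2.
Proof. by []. Qed.

Definition agree (xi xi' : S) x y :=
  [forall z, ((z != x) && (z != y)) ==> (nat_of_ord (xi' z) == xi z)].

Definition cond0 (xi xi' : S) x y :=
  agree xi xi' x y && (xi' x + xi' y == xi x + xi y)%N.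

Lemma cond0C xi xi' x y : cond0 xi xi' x y = cond0 xi' xi x y.
Proof.
rewrite /cond0 eq_sym; congr (_ && _).
by apply/forallP/forallP => H z; apply/implyP => Hz; have := implyP (H z) Hz; rewrite eq_sym.
Qed.

Lemma ind_char (xi xi' : S) x y cx cy u : x != y -> (cx <= xi x)%N ->
  (cy <= xi y)%N -> (u <= xi x + xi y - cx - cy)%N ->
  [forall z, nat_of_ord (xi' z) == update xi x y cx u z] =
  [&& cond0 xi xi' x y, (cx <= xi' x)%N, (cy <= xi' y)%N & (nat_of_ord (xi' x) == cx + u)%N].
Proof.
move=> Hxy Hcx Hcy Hu; have Hyx : (y == x) = false by apply/negbTE; rewrite eq_sym.
apply/forallP/idP => [H|].
  have := H x; rewrite /update eqxx => /eqP Hx.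
  have := H y; rewrite /update Hyx eqxx => /eqP Hy.
  have Hag : agree xi xi' x y.
    apply/forallP => z; apply/implyP => /andP [/negbTE Hzx /negbTE Hzy].
    by have := H z; rewrite /update Hzx Hzy.
  rewrite /cond0 Hag /=; apply/and4P; split; try apply/eqP; lia.
move=> /and4P [/andP [/forallP Hag /eqP Hs] H1 H2 /eqP H3] z.
rewrite /update; case: (eqVneq z x) => [->|Hzx]; first by apply/eqP.
case: (eqVneq z y) => [->|Hzy]; first by apply/eqP; lia.
by have := Hag z; rewrite Hzx Hzy.
Qed.

Lemma sum_u (xi xi' : S) x y cx cy : x != y -> (cx <= xi x)%N -> (cy <= xi y)%N ->
  \sum_(u < (xi x + xi y - cx - cy).+1)
     (if [forall z, nat_of_ord (xi' z) == update xi x y cx u z] then 1 else 0 : R)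
  = ([&& cond0 xi xi' x y, (cx <= xi' x)%N & (cy <= xi' y)%N])%:R.
Proof.
move=> Hxy Hcx Hcy.
have Hu' (u : 'I_(xi x + xi y - cx - cy).+1) : (u <= xi x + xi y - cx - cy)%N.
  by rewrite -ltnS.
under eq_bigr => u _ do rewrite (@ind_char xi xi' x y cx cy u Hxy Hcx Hcy (Hu' u)).
case: (boolP [&& cond0 xi xi' x y, (cx <= xi' x)%N & (cy <= xi' y)%N]) => H; last first.
  apply: big1 => u _; case: (boolP (cond0 _ _ _ _)) H => //= H0.
  by case: (cx <= _)%N => //=; case: (cy <= _)%N.
move: (H) => /and3P [H0 H1 H2]; rewrite H0 H1 H2 /=.
have Hu : (xi' x - cx < (xi x + xi y - cx - cy).+1)%N.
  move: H0 => /andP [_ /eqP Hs]; lia.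
rewrite (bigD1 (Ordinal Hu)) //= subnKC // eqxx big1 ?addr0 //.
move=> u Hne; case: eqP => // Hx; case/eqP: Hne; apply: val_inj => /=; lia.
Qed.

Definition G (a b k l : nat) : R :=
  \sum_(cx < a.+1) \sum_(cy < b.+1)
     ((cx <= k)%N%:R * ((cy <= l)%N%:R * ((a + b - cx - cy).+1%:R)^-1)).

Lemma G_min a b k l : G a b k l =
  \sum_(0 <= cx < (minn a k).+1) \sum_(0 <= cy < (minn b l).+1) ((a + b - cx - cy).+1%:R)^-1.
Proof.
rewrite /G.
under eq_bigr => cx _ do rewrite -mulr_sumr (sum_min (fun cy => ((a + b - cx - cy).+1%:R)^-1)).
by rewrite (sum_min (fun cx => \sum_(0 <= cy < (minn b l).+1) ((a + b - cx - cy).+1%:R)^-1)).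
Qed.

Lemma G_sym a b k l : (a + b = k + l)%N -> G a b k l = G k l a b.
Proof. by move=> H; rewrite !G_min H (minnC a) (minnC b). Qed.

Lemma sum_gt0_term (I : finType) (F : I -> R) (i : I) :
  (forall j, 0 <= F j) -> 0 < F i -> 0 < \sum_j F j.
Proof. by move=> H Hi; apply: lt_le_trans Hi (sum_ge_term _ H). Qed.

Lemma G_gt0 a b k l : 0 < G a b k l.
Proof.
rewrite /G; apply: (@sum_gt0_term _ _ ord0).
  by move=> j; apply: sumr_ge0 => i _; rewrite !mulr_ge0 ?ler0n ?invr_ge0 ?ler0n.
apply: (@sum_gt0_term _ _ ord0).
  by move=> j; rewrite !mulr_ge0 ?ler0n ?invr_ge0 ?ler0n.
by rewrite /= !mul1r invr_gt0 ltr0n.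
Qed.

Lemma Pxy_canon xi xi' x y : x != y -> Pxy xi xi' x y =
  (cond0 xi xi' x y)%:R *
  ((xi x).+1%:R^-1 * (xi y).+1%:R^-1 * G (xi x) (xi y) (xi' x) (xi' y)).
Proof.
move=> Hxy; rewrite /Pxy /G !mulr_sumr; apply: eq_bigr => cx _.
rewrite !mulr_sumr; apply: eq_bigr => cy _.
rewrite -mulr_sumr sum_u //; last by rewrite -ltnS.
2: by rewrite -ltnS.
case: (cond0 _ _ _ _); case: (cx <= _)%N; case: (cy <= _)%N => /=; ring.
Qed.


Lemma cond0_CNM xi xi' x y : x != y -> cond0 xi xi' x y -> in_CNM xi' = in_CNM xi.
Proof.
move=> Hxy /andP [/forallP Hag /eqP Hs]; rewrite /in_CNM.
rewrite (@big_split2 _ _ _ addn _ _ _ Hxy) [in RHS](@big_split2 _ _ _ addn _ _ _ Hxy) /=.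
rewrite !addnA Hs; congr (_ + _ == _)%N; apply: eq_bigr => z Hz.
by apply/eqP; have := Hag z; rewrite Hz.
Qed.

Definition pi0 (xi : S) : R := (in_CNM xi)%:R * \prod_v ((xi v).+1)%:R.

Lemma db_edge xi xi' x y : x != y ->
  pi0 xi * Pxy xi xi' x y = pi0 xi' * Pxy xi' xi x y.
Proof.
move=> Hxy; rewrite !Pxy_canon // (cond0C xi').
case: (boolP (cond0 xi xi' x y)) => H; last by rewrite !mul0r !mulr0.
rewrite /pi0 (cond0_CNM Hxy H).
rewrite (@big_split2 _ _ _ *%R _ _ _ Hxy) [in RHS](@big_split2 _ _ _ *%R _ _ _ Hxy) /=.
have -> : \prod_(v | (v != x) && (v != y)) ((xi' v).+1)%:R =
          \prod_(v | (v != x) && (v != y)) ((xi v).+1)%:R :> R.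
  move: H => /andP [/forallP Hag _].
  by apply: eq_bigr => z Hz; have := Hag z; rewrite Hz => /eqP ->.
move: (H) => /andP [_ /eqP Hs]; rewrite (G_sym Hs).
set Q := \prod_(v | _) _; set g := G _ _ _ _.
have nz n : (n.+1%:R : R) != 0 by rewrite pnatr_eq0.
move: (nz (xi x)) (nz (xi y)) (nz (xi' x)) (nz (xi' y)).
set A1 := (xi x).+1%:R; set A2 := (xi y).+1%:R.
set A3 := (xi' x).+1%:R; set A4 := (xi' y).+1%:R => h1 h2 h3 h4.
clearbody A1 A2 A3 A4 Q g.
by field; rewrite h1 h2 h3 h4.
Qed.

Lemma sum_config_ind (f : V -> nat) : (forall z, f z <= M)%N ->
  \sum_(xi' : S) (if [forall z, nat_of_ord (xi' z) == f z] then 1 else 0 : R) = 1.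
Proof.
move=> Hf; pose g : S := [ffun z => inord (f z)].
have Hg : [forall z, nat_of_ord (g z) == f z].
  by apply/forallP => z; rewrite ffunE inordK // ltnS.
rewrite (bigD1 g) //= Hg big1 ?addr0 // => xi' Hne.
case: ifP => // /forallP H; case/eqP: Hne; apply/ffunP => z.
by apply: val_inj => /=; rewrite ffunE inordK ?ltnS //; apply/eqP.
Qed.

Lemma CNM_le (xi : S) x y : in_CNM xi -> x != y -> (xi x + xi y <= M)%N.
Proof.
move=> /eqP H Hxy; apply: (leq_trans _ (eq_leq H)).
by rewrite (@big_split2 _ _ _ addn _ _ _ Hxy) /= addnA leq_addr.
Qed.

Lemma sum_const_inv n (c : R) : \sum_(i < n.+1) c / n.+1%:R = c.
Proof.
by rewrite sumr_const card_ord -mulrnAr -[_^-1 *+ _]mulr_natr mulVf ?mulr1 // pnatr_eq0.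
Qed.

Lemma Pxy_sum (xi : S) x y : in_CNM xi -> x != y -> \sum_xi' Pxy xi xi' x y = 1.
Proof.
move=> HC Hxy; have Hle := CNM_le HC Hxy; rewrite /Pxy.
transitivity (\sum_(cx < (xi x).+1) \sum_(cy < (xi y).+1)
   \sum_(u < (xi x + xi y - cx - cy).+1)
     ((xi x).+1%:R^-1 / (xi y).+1%:R / (xi x + xi y - cx - cy).+1%:R : R)).
  rewrite exchange_big; apply: eq_bigr => cx _.
  rewrite exchange_big; apply: eq_bigr => cy _.
  rewrite exchange_big; apply: eq_bigr => u _.
  rewrite -mulr_sumr sum_config_ind ?mulr1 // => z.
  have Hcx := ltn_ord cx; have Hcy := ltn_ord cy; have Hu := ltn_ord u.
  rewrite /update; case: (z == x); first by lia.
  case: (z == y); first by lia.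
  by rewrite -ltnS.
under eq_bigr => cx _ do under eq_bigr => cy _ do rewrite sum_const_inv.
under eq_bigr => cx _ do rewrite sum_const_inv.
by rewrite sumr_const card_ord -[_^-1 *+ _]mulr_natr mulVf // pnatr_eq0.
Qed.

Lemma Pxy_ge0 (xi xi' : S) x y : 0 <= Pxy xi xi' x y.
Proof.
rewrite /Pxy; apply: sumr_ge0 => cx _; apply: sumr_ge0 => cy _.
apply: sumr_ge0 => u _; apply: mulr_ge0; last by case: ifP.
by rewrite !mulr_ge0 ?invr_ge0 ?ler0n.
Qed.

Lemma edges_neq p : p \in edges e -> p.1 != p.2.
Proof.
rewrite inE; case: eqP => // ->; by rewrite e_irr.
Qed.

Lemma P_ge0 (xi xi' : S) : 0 <= step_prob R e xi xi'.
Proof.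
rewrite step_probE mulr_ge0 ?invr_ge0 ?ler0n //.
by apply: sumr_ge0 => p _; apply: Pxy_ge0.
Qed.

Hypothesis edges_pos : (0 < #|edges e|)%N.

Lemma P_sum (xi : S) : in_CNM xi -> \sum_xi' step_prob R e xi xi' = 1.
Proof.
move=> HC; under eq_bigr do rewrite step_probE.
rewrite -mulr_sumr exchange_big /=.
rewrite (eq_bigr (fun _ => 1)); last by move=> p Hp; apply: Pxy_sum => //; apply: edges_neq.
by rewrite sumr_const mulVf // pnatr_eq0 -lt0n.
Qed.

Lemma P_supp (xi xi' : S) : in_CNM xi -> ~~ in_CNM xi' -> step_prob R e xi xi' = 0.
Proof.
move=> H H'; rewrite step_probE big1 ?mulr0 // => p Hp.
rewrite Pxy_canon ?edges_neq //.
case: (boolP (cond0 _ _ _ _)) => Hc; last by rewrite mul0r.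
by rewrite (cond0_CNM (edges_neq Hp) Hc) H in H'.
Qed.

Lemma P_db (xi xi' : S) : pi0 xi * step_prob R e xi xi' = pi0 xi' * step_prob R e xi' xi.
Proof.
rewrite !step_probE !(mulrCA (pi0 _)) !mulr_sumr.
by apply: eq_bigr => p Hp; rewrite db_edge // edges_neq.
Qed.

Lemma pi0_stat (b : S) : \sum_a pi0 a * step_prob R e a b = pi0 b.
Proof.
under eq_bigr do rewrite P_db.
rewrite -mulr_sumr; case: (boolP (in_CNM b)) => Hb; first by rewrite P_sum ?mulr1.
by rewrite /pi0 (negbTE Hb) !mul0r.
Qed.

Lemma P_pos (xi xi' : S) x y : e x y -> cond0 xi xi' x y -> 0 < step_prob R e xi xi'.
Proof.
move=> Exy Hc; have Hxy : x != y by apply: contraTneq Exy => ->; rewrite e_irr.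
rewrite step_probE mulr_gt0 ?invr_gt0 ?ltr0n // big_mkcond /=.
apply: (@sum_gt0_term _ _ (x, y)).
  by move=> p; case: ifP => // _; apply: Pxy_ge0.
by rewrite inE /= Exy Pxy_canon // Hc mul1r !mulr_gt0 ?G_gt0 ?invr_gt0 ?ltr0n.
Qed.

End Model.

Lemma dist_exists (V : finType) (e : rel V) (x : V) :
  (forall v, connect e v x) ->
  exists d : V -> nat, forall v, v != x -> exists w, e v w && (d w < d v)%N.
Proof.
move=> Hcon.
have Hex v : exists n, [exists p : n.-tuple V, path e v p && (last v p == x)].
  have /connectP [p Hp Hl] := Hcon v; exists (size p).
  by apply/existsP; exists (in_tuple p); rewrite /= Hp -Hl eqxx.
exists (fun v => ex_minn (Hex v)) => v Hv.
case: ex_minnP => n /existsP [p /andP [Hp Hl]] Hmin.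
have Hs := size_tuple p.
move: Hp Hl Hs; case: (tval p) => [|w p'] /=; first by move=> _ /eqP E; rewrite E eqxx in Hv.
move=> /andP [Evw Hp'] Hl Hs; exists w; rewrite Evw /=.
case: ex_minnP => m _ Hm.
have : (m <= size p')%N.
  apply: Hm; apply/existsP; exists (in_tuple p'); by rewrite /= Hp' Hl.
by rewrite -Hs.
Qed.

Lemma law_glaw (R : realType) (V : finType) (e : rel V) (M : nat)
  (xi0 : config V M) t b : law R e xi0 t b = glaw (@step_prob R V e M) xi0 t b.
Proof.
elim: t b => [|t IH] b //=; by apply: eq_bigr => a _; rewrite IH.
Qed.

Unset Implicit Arguments.

Theorem theorem3 (R : realType) (V : finType) (e : rel V) (M : nat)
  (e_sym : symmetric e) (e_irr : irreflexive e)
  (e_conn : forall x y : V, connect e x y)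
  (N_ge2 : (2 <= #|V|)%N)
  (xi0 : config V M) (xi0_in : in_CNM xi0)
  (x : V) (c : nat) (hc : (c <= M)%N) :
  (fun t : nat => prob_at R e xi0 t x c) @ \oo -->
    ((c.+1)%:R * ('C(M - c + 2 * #|V| - 3, 2 * #|V| - 3))%:R
       / ('C(M + 2 * #|V| - 1, 2 * #|V| - 1))%:R : R).
Proof.
have [v0 Hv0] : exists v, v != x.
  case: (pickP (fun v => v != x)) => [v Hv|H]; first by exists v.
  have E : #|V| = #|pred1 x|.
    by apply: eq_card => a; rewrite !inE; have := H a => /= /negbFE ->.
  by rewrite E card1 in N_ge2.
have [d Hd] := dist_exists (fun v => e_conn v x).
have [w0 /andP [Ev0w0 _]] := Hd v0 Hv0.
have Epos : (0 < #|edges e|)%N.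
  by apply/card_gt0P; exists (v0, w0); rewrite inE.
pose s : config V M := [ffun z => if z == x then ord_max else ord0].
have Hs : in_CNM s.
  rewrite /in_CNM (bigD1 x) //= ffunE eqxx /= big1 ?addn0 // => z Hz.
  by rewrite ffunE (negbTE Hz).
pose Phi (xi : config V M) := (\sum_z xi z * d z)%N.
have cond0_refl (xi : config V M) a b : cond0 xi xi a b.
  by rewrite /cond0 eqxx andbT; apply/forallP => z; apply/implyP.
have Pss : 0 < step_prob R e s s := P_pos R e_irr Epos Ev0w0 (cond0_refl s v0 w0).
have desc : forall a, in_CNM a -> a != s ->
    exists b, [/\ in_CNM b, 0 < step_prob R e a b & (Phi b < Phi a)%N].
  move=> a Ha Has.
  have [v /andP [Hvx Hav]] : exists v, (v != x) && (0 < a v)%N.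
    apply/existsP; apply: contraNT Has; rewrite negb_exists => /forallP H.
    have H0 z : z != x -> nat_of_ord (a z) = 0%N.
      by move=> Hz; have := H z; rewrite Hz /= -eqn0Ngt => /eqP.
    apply/eqP/ffunP => z; apply: val_inj; rewrite ffunE /=.
    case: (eqVneq z x) => [->|Hz]; last by rewrite H0.
    move: Ha; rewrite /in_CNM (bigD1 x) //= big1 ?addn0; first by move/eqP.
    by move=> y Hy; rewrite H0.
  have [w /andP [Evw Hdw]] := Hd v Hvx.
  have Hvw : v != w by apply: contraTneq Evw => ->; rewrite e_irr.
  have Hle := CNM_le Ha Hvw.
  pose b : config V M := [ffun z => if z == v then ord0
                          else if z == w then inord (a v + a w) else a z].
  have bv : nat_of_ord (b v) = 0%N by rewrite ffunE eqxx.
  have bw : nat_of_ord (b w) = (a v + a w)%N.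
    by rewrite ffunE eq_sym (negbTE Hvw) eqxx inordK // ltnS.
  have bz z : z != v -> z != w -> b z = a z.
    by move=> /negbTE h1 /negbTE h2; rewrite ffunE h1 h2.
  have Hc : cond0 a b v w.
    rewrite /cond0 bv bw add0n eqxx andbT; apply/forallP => z; apply/implyP.
    by move=> /andP [h1 h2]; rewrite bz.
  exists b; split.
  - by rewrite (cond0_CNM Hvw Hc).
  - by have := P_pos R e_irr Epos Evw Hc.
  - rewrite /Phi (@big_split2 _ _ _ addn _ _ _ Hvw) [X in (_ < X)%N](@big_split2 _ _ _ addn _ _ _ Hvw) /=.
    rewrite bv bw.
    have -> : (\sum_(z | (z != v) && (z != w)) b z * d z =
               \sum_(z | (z != v) && (z != w)) a z * d z)%N.
      by apply: eq_bigr => z /andP [h1 h2]; rewrite bz.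
    nia.
have [n0 [del [n0pos delpos Hdel]]] := reach_unif (@P_ge0 R V e M) Pss desc.
have -> : (fun t => prob_at R e xi0 t x c) =
   (fun t => \sum_(b : config V M | nat_of_ord (b x) == c) glaw (@step_prob R V e M) xi0 t b).
  by apply: funext => t; rewrite /prob_at; apply: eq_bigr => b _; rewrite law_glaw.
have Vpos : (0 < #|V|)%N by apply: leq_trans N_ge2.
pose Z : R := ('C(M + 2 * #|V| - 1, M))%:R.
have Zpos : 0 < Z by rewrite ltr0n bin_gt0; lia.
pose pi (b : config V M) := pi0 R b / Z.
have pi_stat b : \sum_a pi a * step_prob R e a b = pi b.
  rewrite /pi -(pi0_stat R e_irr Epos) mulr_suml; apply: eq_bigr => a _.
  by rewrite mulrAC.
have pi_ge0 a : 0 <= pi a.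
  rewrite /pi /pi0 !mulr_ge0 ?invr_ge0 ?ler0n ?(ltW Zpos) //.
  by apply: prodr_ge0 => v _; rewrite ler0n.
have pi_supp a : ~~ in_CNM a -> pi a = 0.
  by move=> /negbTE H; rewrite /pi /pi0 H !mul0r.
have pi_sum : \sum_a pi a = 1.
  rewrite /pi -mulr_suml /pi0.
  have -> : \sum_(a : config V M) (in_CNM a)%:R * \prod_v ((a v).+1)%:R =
            \sum_(a : config V M | in_CNM a) \prod_v ((a v).+1)%:R :> R.
    by rewrite [RHS]big_mkcond; apply: eq_bigr => a _; case: (in_CNM a); rewrite ?mul1r ?mul0r.
  by rewrite total_count // mulfV // gt_eqF.
have -> : ((c.+1)%:R * ('C(M - c + 2 * #|V| - 3, 2 * #|V| - 3))%:R
       / ('C(M + 2 * #|V| - 1, 2 * #|V| - 1))%:R : R) =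
       \sum_(b : config V M | nat_of_ord (b x) == c) pi b.
  rewrite /pi -mulr_suml /pi0.
  have -> : \sum_(a : config V M | nat_of_ord (a x) == c) (in_CNM a)%:R * \prod_v ((a v).+1)%:R =
            \sum_(a : config V M | in_CNM a && (nat_of_ord (a x) == c)) \prod_v ((a v).+1)%:R :> R.
    rewrite [RHS]big_mkcond [LHS]big_mkcond; apply: eq_bigr => a _.
    by case: (in_CNM a); case: (_ == c); rewrite ?mul1r ?mul0r.
  rewrite marg_count // /Z.
  have E1 : 'C(M - c + 2 * #|V| - 3, 2 * #|V| - 3) = 'C(M - c + 2 * #|V| - 3, M - c).
    rewrite -(@bin_sub (M - c + 2 * #|V| - 3) (2 * #|V| - 3)); last by lia.
    by congr 'C(_, _); lia.
  have E2 : 'C(M + 2 * #|V| - 1, 2 * #|V| - 1) = 'C(M + 2 * #|V| - 1, M).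
    rewrite -(@bin_sub (M + 2 * #|V| - 1) (2 * #|V| - 1)); last by lia.
    by congr 'C(_, _); lia.
  by rewrite E1 E2.
exact: (gen_cvg (@P_ge0 R V e M) (P_sum R e_irr Epos) (P_supp R e_irr)
         pi_stat pi_ge0 pi_supp pi_sum xi0_in n0pos delpos Hdel).
Qed.
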